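(* Let $I=[\alpha,\beta]\subset\mathbb R$ and let $f,g:I\to\mathbb R$ be continuous functions such that there exist real numbers $0<m<M$ with $m\le f(x)\le M$ and $m\le g(x)\le M$ for all $x\in I$, and $\max(\|f-g\|_{L^1(I)},\|f-g\|_\infty)<m$. Fix $x_0\in I$ and let $\gamma$ and $\eta$ be the solutions of $\dot x=f(x)$ and $\dot x=g(x)$ respectively with $\gamma(0)=\eta(0)=x_0$, defined (with values in $I$) on intervals of times $J_\gamma$ and $J_\eta$. Then for all $t\in J_\gamma\cap J_\eta$, $$|\gamma(t)-\eta(t)|\le\frac{M}{m^2}\|f-g\|_{L^1(I)}.$$
   Context: $\|\cdot\|_{L^1(I)}$ and $\|\cdot\|_\infty$ are the usual $L^1$ and sup norms on $I$. *)

(* Defs.v *)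
From Stdlib Require Import Reals.
From Coquelicot Require Import Coquelicot.
Open Scope R_scope.

Definition Icc (a b : R) : R -> Prop := fun x => a <= x <= b.

Definition L1norm (a b : R) (h : R -> R) : R := RInt (fun x => Rabs (h x)) a b.

Definition supnorm (a b : R) (h : R -> R) : R :=
  real (Lub_Rbar (fun y => exists x, a <= x <= b /\ y = Rabs (h x))).

Definition is_interval (J : R -> Prop) : Prop :=
  forall a b c, J a -> J c -> a <= b <= c -> J b.

(* Derivative of y at t relative to the set J (one-sided at endpoints). *)
Definition is_derive_within (J : R -> Prop) (y : R -> R) (t l : R) : Prop :=
  filterlim (fun s => (y s - y t) / (s - t))
            (within (fun s => J s /\ s <> t) (locally t)) (locally l).

Definition is_solution (a b : R) (F : R -> R) (x0 : R) (J : R -> Prop) (y : R -> R) : Prop :=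
  is_interval J /\ J 0 /\ y 0 = x0 /\
  forall t, J t -> a <= y t <= b /\ is_derive_within J y t (F (y t)).

(* Main.v *)
Require Import Defs.
From Stdlib Require Import Reals Lra.
From Coquelicot Require Import Coquelicot.
Open Scope R_scope.

Lemma div_bound A h c e : h <> 0 -> Rabs (A / h - c) < e -> Rabs (A - h * c) <= e * Rabs h.
Proof.
  intros Hh H. replace (A - h * c) with (h * (A / h - c)) by (field; auto).
  rewrite Rabs_mult. rewrite Rmult_comm. apply Rmult_le_compat_r. apply Rabs_pos. lra.
Qed.

Lemma within_eps (J : R -> Prop) (y : R -> R) (t l : R) :
  is_derive_within J y t l -> forall eps, 0 < eps -> exists d, 0 < d /\
  forall s, Rabs (s - t) < d -> J s -> s <> t -> Rabs ((y s - y t) / (s - t) - l) < eps.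
Proof.
  intros H eps He.
  destruct (proj1 (filterlim_locally _ _) H (mkposreal eps He)) as [d Hd].
  exists d; split; [apply cond_pos|].
  intros s Hs Js Hst. apply (Hd s Hs (conj Js Hst)).
Qed.

Lemma derPhi (F : R -> R) (a u : R) : (forall x, continuous F x) -> (forall x, F x <> 0) ->
  derivable_pt_lim (fun v => RInt (fun w => / F w) a v) u (/ F u).
Proof.
  intros C N. apply is_derive_Reals.
  apply (is_derive_RInt (fun w => / F w) _ a).
  - exists (mkposreal 1 Rlt_0_1). intros b0 _. apply (RInt_correct (V:=R_CompleteNormedModule)).
    apply ex_RInt_continuous. intros z _. apply continuous_Rinv_comp; auto.
  - apply continuous_Rinv_comp; auto.
Qed.

Definition clamp (a b x : R) := Rmax a (Rmin b x).

Lemma clamp_in a b x : a <= b -> a <= clamp a b x <= b.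
Proof. intros; unfold clamp, Rmax, Rmin; repeat destruct Rle_dec; lra. Qed.

Lemma clamp_id a b x : a <= x <= b -> clamp a b x = x.
Proof. intros; unfold clamp, Rmax, Rmin; repeat destruct Rle_dec; lra. Qed.

Lemma clamp_lip a b x y : a <= b -> Rabs (clamp a b y - clamp a b x) <= Rabs (y - x).
Proof. intros; unfold clamp, Rmax, Rmin, Rabs; repeat destruct Rle_dec; repeat destruct Rcase_abs; lra. Qed.

Lemma const_lemma (a b : R) (phi : R -> R) : a <= b ->
  (forall x, a <= x <= b -> forall eps, 0 < eps -> exists d, 0 < d /\
     forall y, a <= y <= b -> Rabs (y - x) < d -> Rabs (phi y - phi x) <= eps * Rabs (y - x)) ->
  phi b = phi a.
Proof.
  intros Hab H.
  set (psi := fun x => phi (clamp a b x)).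
  assert (D : forall x, derivable_pt_lim psi x 0).
  { intros x eps Heps.
    destruct (H (clamp a b x) (clamp_in a b x Hab) (eps/2) ltac:(lra)) as [d [Hd Hy]].
    exists (mkposreal d Hd). intros h Hh0 Hh. simpl in Hh.
    unfold psi.
    assert (L := clamp_lip a b x (x+h) Hab).
    replace (x + h - x) with h in L by ring.
    assert (K := Hy (clamp a b (x+h)) (clamp_in a b (x+h) Hab) ltac:(lra)).
    assert (Hh1 : 0 < Rabs h) by (apply Rabs_pos_lt; auto).
    rewrite Rminus_0_r. unfold Rdiv. rewrite Rabs_mult, Rabs_inv.
    apply Rle_lt_trans with (eps/2 * Rabs h * / Rabs h).
    - apply Rmult_le_compat_r. left; apply Rinv_0_lt_compat; auto.
      eapply Rle_trans; [apply K|]. apply Rmult_le_compat_l; lra.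
    - field_simplify; lra. }
  assert (E : psi b - psi a = 0).
  { destruct (MVT_gen psi a b (fun _ => 0)) as [c [_ Hc]].
    - intros x _. apply is_derive_Reals. apply D.
    - intros x _. apply continuity_pt_filterlim. apply (ex_derive_continuous psi x).
      exists 0. apply is_derive_Reals, D.
    - rewrite Hc; ring. }
  unfold psi in E. rewrite !clamp_id in E by lra. lra.
Qed.

Lemma solA (F y : R -> R) (J : R -> Prop) (m : R) : 0 < m ->
  (forall x, continuous F x) -> (forall x, m <= F x) ->
  is_interval J -> J 0 -> (forall s, J s -> is_derive_within J y s (F (y s))) ->
  forall t, J t -> RInt (fun u => / F u) (y 0) (y t) = t.
Proof.
  intros Hm C Fm HJ J0 Hd t Jt.
  assert (N : forall x, F x <> 0) by (intro x; specialize (Fm x); lra).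
  set (Phi := fun v => RInt (fun w => / F w) (y 0) v).
  set (phi := fun s => Phi (y s) - s).
  assert (Sub : forall x, Rmin 0 t <= x <= Rmax 0 t -> J x).
  { intros x Hx. unfold Rmin, Rmax in Hx. destruct Rle_dec.
    - apply (HJ 0 x t); auto.
    - apply (HJ t x 0); auto. }
  assert (K : phi (Rmax 0 t) = phi (Rmin 0 t)).
  { apply const_lemma. apply Rmin_Rmax.
    intros x Hx eps He.
    assert (Jx := Sub x Hx).
    set (Fx := F (y x)). assert (HFx : m <= Fx) by apply Fm.
    set (eps1 := eps / (2 * (Fx + 1))).
    assert (He1 : 0 < eps1) by (unfold eps1; apply Rdiv_lt_0_compat; lra).
    destruct (derPhi F (y 0) (y x) C N eps1 He1) as [d1 Hd1].
    set (eps2 := Rmin 1 (eps * m / 2)).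
    assert (He2 : 0 < eps2) by (unfold eps2; apply Rmin_pos; [lra| apply Rdiv_lt_0_compat; nra]).
    destruct (within_eps J y x _ (Hd x Jx) eps2 He2) as [d2 [Hd2 Hq]].
    exists (Rmin d2 (d1 / (Fx + 1))). split.
    { apply Rmin_pos; auto. apply Rdiv_lt_0_compat; [apply cond_pos|lra]. }
    intros s Hs Hsx.
    destruct (Req_dec s x) as [E|E].
    { subst s. unfold Rminus; rewrite !Rplus_opp_r, Rabs_R0; lra. }
    assert (Hsx1 : Rabs (s - x) < d2) by (eapply Rlt_le_trans; [apply Hsx| apply Rmin_l]).
    assert (Hsx2 : Rabs (s - x) < d1 / (Fx + 1)) by (eapply Rlt_le_trans; [apply Hsx| apply Rmin_r]).
    assert (Hsx0 : s - x <> 0) by lra.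
    specialize (Hq s Hsx1 (Sub s Hs) E).
    fold Fx in Hq.
    assert (B2 := div_bound _ _ _ _ Hsx0 Hq).
    assert (e2le1 : eps2 <= 1) by apply Rmin_l.
    assert (e2le : eps2 <= eps * m / 2) by apply Rmin_r.
    set (h := y s - y x) in *.
    assert (Bh : Rabs h <= (Fx + 1) * Rabs (s - x)).
    { replace h with ((h - (s - x) * Fx) + (s - x) * Fx) by ring.
      eapply Rle_trans; [apply Rabs_triang|]. rewrite Rabs_mult, (Rabs_right Fx) by lra.
      assert (0 <= Rabs (s - x)) by apply Rabs_pos.
      assert (eps2 * Rabs (s - x) <= 1 * Rabs (s - x)) by (apply Rmult_le_compat_r; lra).
      lra. }
    assert (B1 : Rabs (Phi (y s) - Phi (y x) - h * / Fx) <= eps1 * Rabs h).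
    { destruct (Req_dec h 0) as [h0|h0].
      - assert (y s = y x) by (unfold h in h0; lra). rewrite H, h0.
        rewrite Rmult_0_l, Rabs_R0. unfold Rminus; rewrite Rplus_opp_r, Rplus_0_l, Ropp_0, Rabs_R0. lra.
      - apply div_bound; auto. replace (y s) with (y x + h) by (unfold h; ring).
        apply Hd1; auto. eapply Rle_lt_trans; [apply Bh|].
        apply Rmult_lt_reg_r with (/ (Fx + 1)). apply Rinv_0_lt_compat; lra.
        replace ((Fx + 1) * Rabs (s - x) * / (Fx + 1)) with (Rabs (s - x)) by (field; lra).
        exact Hsx2. }
    unfold phi.
    replace (Phi (y s) - s - (Phi (y x) - x)) with
      ((Phi (y s) - Phi (y x) - h * / Fx) + (h - (s - x) * Fx) * / Fx) by (unfold h; field; lra).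
    eapply Rle_trans; [apply Rabs_triang|].
    rewrite Rabs_mult, (Rabs_right (/ Fx)) by (left; apply Rinv_0_lt_compat; lra).
    assert (T1 : eps1 * Rabs h <= eps / 2 * Rabs (s - x)).
    { unfold eps1. apply Rle_trans with (eps / (2 * (Fx + 1)) * ((Fx + 1) * Rabs (s - x))).
      apply Rmult_le_compat_l; [left; exact He1|auto].
      right; field; lra. }
    assert (T2 : Rabs (h - (s - x) * Fx) * / Fx <= eps / 2 * Rabs (s - x)).
    { apply Rle_trans with (eps2 * Rabs (s - x) * / Fx).
      apply Rmult_le_compat_r; [left; apply Rinv_0_lt_compat; lra|auto].
      apply Rle_trans with (eps * m / 2 * Rabs (s - x) * / m).
      - apply Rle_trans with (eps * m / 2 * Rabs (s - x) * / Fx).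
        apply Rmult_le_compat_r; [left; apply Rinv_0_lt_compat; lra|].
        apply Rmult_le_compat_r; [apply Rabs_pos|auto].
        apply Rmult_le_compat_l. assert (0 <= Rabs (s - x)) by apply Rabs_pos. nra.
        apply Rinv_le_contravar; lra.
      - right; field; lra. }
    lra. }
  assert (P0 : phi 0 = 0).
  { unfold phi, Phi. rewrite RInt_point. unfold zero; simpl; ring. }
  assert (Pt : phi t = 0).
  { unfold Rmin, Rmax in K. destruct Rle_dec; rewrite K || rewrite <- K; auto. }
  unfold phi, Phi in Pt |- *. cbv beta in Pt. lra.
Qed.

Lemma exR (h : R -> R) p q : (forall x, continuous h x) -> ex_RInt h p q.
Proof. intros C. apply (ex_RInt_continuous (V:=R_CompleteNormedModule)). intros; auto. Qed.

Lemma lowbound (h : R -> R) p q c : (forall x, continuous h x) -> 0 <= c -> (forall x, c <= h x) ->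
  c * Rabs (q - p) <= Rabs (RInt h p q).
Proof.
  intros C Hc Hh.
  assert (G : forall p q, p <= q -> c * (q - p) <= RInt h p q).
  { intros p0 q0 Hpq.
    assert (E := RInt_const p0 q0 c). 
    apply Rle_trans with (RInt (fun _ => c) p0 q0).
    - rewrite E. unfold scal; simpl; unfold mult; simpl. lra.
    - apply RInt_le; auto. apply exR; intros; apply continuous_const. apply exR; auto. }
  destruct (Rle_dec p q) as [H|H].
  - rewrite (Rabs_right (q - p)) by lra. specialize (G p q H).
    rewrite Rabs_right; [lra|]. assert (0 <= c * (q - p)) by nra. lra.
  - rewrite <- (opp_RInt_swap h q p) by (apply exR; auto).
    unfold opp; simpl. rewrite Rabs_Ropp.
    rewrite (Rabs_left1 (q - p)) by lra. specialize (G q p ltac:(lra)).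
    rewrite Rabs_right; [lra|]. assert (0 <= c * (p - q)) by nra. lra.
Qed.

Lemma upbound (h k : R -> R) alpha beta p q : (forall x, continuous h x) -> (forall x, continuous k x) ->
  (forall x, Rabs (h x) <= k x) -> alpha <= p <= beta -> alpha <= q <= beta ->
  Rabs (RInt h p q) <= RInt k alpha beta.
Proof.
  intros Ch Ck Hk Hp Hq.
  assert (k0 : forall x, 0 <= k x) by (intro x; eapply Rle_trans; [apply Rabs_pos|apply Hk]).
  assert (G : forall p q, alpha <= p <= beta -> alpha <= q <= beta -> p <= q ->
     Rabs (RInt h p q) <= RInt k alpha beta).
  { intros p0 q0 H0 H1 Hpq.
    eapply Rle_trans. { apply abs_RInt_le; [lra| apply exR; auto]. }
    apply Rle_trans with (RInt k p0 q0). { apply RInt_le; [lra| apply exR; intros; apply continuous_Rabs_comp; auto | apply exR; auto | intros x _; apply Hk]. }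
    rewrite <- (RInt_Chasles k alpha p0 beta) by (apply exR; auto).
    rewrite <- (RInt_Chasles k p0 q0 beta) by (apply exR; auto).
    unfold plus; simpl.
    assert (0 <= RInt k alpha p0) by (apply RInt_ge_0; [lra|apply exR; auto|intros; auto]).
    assert (0 <= RInt k q0 beta) by (apply RInt_ge_0; [lra|apply exR; auto|intros; auto]).
    lra. }
  destruct (Rle_dec p q) as [H|H]; auto.
  rewrite <- (opp_RInt_swap h q p) by (apply exR; auto).
  unfold opp; simpl. rewrite Rabs_Ropp. apply G; auto; lra.
Qed.

Lemma clamp_cont (f : R -> R) alpha beta : alpha <= beta -> continuous_on (Icc alpha beta) f ->
  forall x, continuous (fun z => f (clamp alpha beta z)) x.
Proof.
  intros Hab Cf x.
  set (c := clamp alpha beta x).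
  assert (Hc : Icc alpha beta c) by (apply clamp_in; auto).
  apply (filterlim_comp _ _ _ (clamp alpha beta) f (locally x) (within (Icc alpha beta) (locally c))).
  - intros P [eps HP]. exists eps. intros z Hz. apply HP.
    + change (Rabs (clamp alpha beta z - c) < eps).
      eapply Rle_lt_trans; [apply clamp_lip; auto| exact Hz].
    + apply clamp_in; auto.
  - apply Cf; auto.
Qed.

Theorem lemma4p1 (alpha beta : R) (f g : R -> R) (m M : R) (x0 : R)
  (Jgamma Jeta : R -> Prop) (gamma eta : R -> R) :
  alpha <= beta ->
  continuous_on (Icc alpha beta) f ->
  continuous_on (Icc alpha beta) g ->
  0 < m -> m < M ->
  (forall x, alpha <= x <= beta -> m <= f x <= M /\ m <= g x <= M) ->
  Rmax (L1norm alpha beta (fun x => f x - g x))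
       (supnorm alpha beta (fun x => f x - g x)) < m ->
  alpha <= x0 <= beta ->
  is_solution alpha beta f x0 Jgamma gamma ->
  is_solution alpha beta g x0 Jeta eta ->
  forall t, Jgamma t -> Jeta t ->
    Rabs (gamma t - eta t) <= M / (m ^ 2) * L1norm alpha beta (fun x => f x - g x).
Proof.
  intros Hab Cf Cg Hm HmM Hb _ Hx0 [IJg [J0g [g0 Sg]]] [IJe [J0e [e0 Se]]] t Jgt Jet.
  set (fc := fun z => f (clamp alpha beta z)).
  set (gc := fun z => g (clamp alpha beta z)).
  assert (Cfc : forall x, continuous fc x) by (apply clamp_cont; auto).
  assert (Cgc : forall x, continuous gc x) by (apply clamp_cont; auto).
  assert (Bc : forall x, m <= fc x <= M /\ m <= gc x <= M).
  { intro x. apply Hb. apply clamp_in; auto. }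
  assert (Efc : forall x, alpha <= x <= beta -> fc x = f x) by (intros; unfold fc; rewrite clamp_id; auto).
  assert (Egc : forall x, alpha <= x <= beta -> gc x = g x) by (intros; unfold gc; rewrite clamp_id; auto).
  assert (Ha : RInt (fun u => / fc u) x0 (gamma t) = t).
  { rewrite <- g0. apply (solA fc gamma Jgamma m); auto.
    - intro x; apply Bc.
    - intros s Js. destruct (Sg s Js) as [Hi Hd]. rewrite Efc; auto. }
  assert (Hbb : RInt (fun u => / gc u) x0 (eta t) = t).
  { rewrite <- e0. apply (solA gc eta Jeta m); auto.
    - intro x; apply Bc.
    - intros s Js. destruct (Se s Js) as [Hi Hd]. rewrite Egc; auto. }
  destruct (Sg t Jgt) as [Ia _]. destruct (Se t Jet) as [Ib _].
  set (a := gamma t) in *. set (b := eta t) in *.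
  assert (Cif : forall x, continuous (fun u => / fc u) x).
  { intro x; apply continuous_Rinv_comp; auto. specialize (Bc x); lra. }
  assert (Cig : forall x, continuous (fun u => / gc u) x).
  { intro x; apply continuous_Rinv_comp; auto. specialize (Bc x); lra. }
  assert (Eq : RInt (fun u => / fc u) b a = RInt (fun u => / gc u - / fc u) x0 b).
  { assert (Ch := RInt_Chasles (fun u => / fc u) x0 b a (exR _ _ _ Cif) (exR _ _ _ Cif)).
    assert (Mi := RInt_minus (fun u => / gc u) (fun u => / fc u) x0 b (exR _ _ _ Cig) (exR _ _ _ Cif)).
    unfold plus, minus, opp in *; simpl in *. unfold plus, opp in *; simpl in *.
    unfold Rminus; rewrite Mi. lra. }
  assert (L : / M * Rabs (a - b) <= Rabs (RInt (fun u => / fc u) b a)).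
  { apply lowbound; auto. left; apply Rinv_0_lt_compat; lra.
    intro x. destruct (Bc x) as [[H1 H2] _]. apply Rinv_le_contravar; lra. }
  set (k := fun x => / m ^ 2 * Rabs (fc x - gc x)).
  assert (Ck : forall x, continuous k x).
  { intro x. unfold k. apply (continuous_scal_r (K:=R_AbsRing) (V:=R_NormedModule) (/ m ^ 2) (fun x => Rabs (fc x - gc x))).
    apply continuous_Rabs_comp. apply (continuous_minus fc gc); auto. }
  assert (U : Rabs (RInt (fun u => / gc u - / fc u) x0 b) <= RInt k alpha beta).
  { apply upbound; auto.
    - intro x. apply (continuous_minus (fun u => / gc u) (fun u => / fc u)); auto.
    - intro x. destruct (Bc x) as [[H1 H2] [H3 H4]]. unfold k.
      replace (/ gc x - / fc x) with ((fc x - gc x) * / (fc x * gc x)) by (field; lra).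
      rewrite Rabs_mult, (Rabs_right (/ (fc x * gc x))) by (left; apply Rinv_0_lt_compat; nra).
      rewrite Rmult_comm. apply Rmult_le_compat_r. apply Rabs_pos.
      apply Rinv_le_contravar. nra. simpl. nra. }
  assert (Ek : RInt k alpha beta = / m ^ 2 * L1norm alpha beta (fun x => f x - g x)).
  { unfold k, L1norm.
    rewrite (RInt_scal (V:=R_CompleteNormedModule) (fun x => Rabs (fc x - gc x))).
    2: { apply exR. intro x. apply continuous_Rabs_comp. apply (continuous_minus fc gc); auto. }
    unfold scal; simpl; unfold mult; simpl. f_equal.
    apply RInt_ext. intros x Hx. rewrite Rmin_left, Rmax_right in Hx by lra.
    rewrite Efc, Egc by lra. auto. }
  rewrite Eq in L. rewrite Ek in U.
  assert (HM : 0 < M) by lra.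
  assert (R1 : Rabs (a - b) <= M * (/ m ^ 2 * L1norm alpha beta (fun x => f x - g x))).
  { apply Rmult_le_reg_l with (/ M). apply Rinv_0_lt_compat; lra.
    replace (/ M * (M * (/ m ^ 2 * L1norm alpha beta (fun x => f x - g x))))
      with (/ m ^ 2 * L1norm alpha beta (fun x => f x - g x)) by (field; lra).
    lra. }
  unfold Rdiv. rewrite Rmult_assoc. exact R1.
Qed.
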